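(* Let $F$ be a sensori-computational device and $N\subseteq Y(F)$ such that every nonempty string $s_1s_2\cdots s_k\in\mathcal{L}(F)$ has $s_1\in Y(F)\setminus N$. Then there exists a sensori-computational device that output simulates $F$ modulo the $N$-pump $P_N$ if and only if there exists a sensori-computational device that output simulates $F$ modulo the $N$-shrink $\pi_N$ (both taken with $L=\mathcal{L}(F)$, $\Sigma=Y(F)$).
   Context: A sensori-computational device is a 6-tuple $F=(V,V_0,Y,\tau,C,c)$ where $V$ is a non-empty finite set of states, $V_0\subseteq V$ a non-empty set of initial states, $Y=Y(F)$ a finite set of observations, $\tau:V\times V\to\mathcal{P}(Y)$, $C$ a set of outputs, $c:V\to\mathcal{P}(C)\setminus\{\emptyset\}$. A string $y_1\cdots y_n$ reaches $w$ from $v$ if there are states $w_0=v,\dots,w_n=w$ with $y_i\in\tau(w_{i-1},w_i)$; $\mathcal{R}_F(s)$ is the set of states reached by $s$ from some initial state; $\mathcal{L}(F)=\{s\in Y^*:\mathcal{R}_F(s)\ne\emptyset\}$; $\mathcal{C}_F(s)=\bigcup_{v\in\mathcal{R}_F(s)}c(v)$. For a relation $R\subseteq A\times B$ between sets of strings, $F'$ output simulates $F$ modulo $R$ if for every $s\in\mathcal{L}(F)$: (1) some $t\in\mathcal{L}(F')$ has $s\,R\,t$; (2) every $t\in B$ with $s\,R\,t$ satisfies $t\in\mathcal{L}(F')$ and $\mathcal{C}_F(s)\supseteq\mathcal{C}_{F'}(t)$. For a set $\Sigma$, $L\subseteq\Sigma^*$ and $N\subseteq\Sigma$: the $N$-shrink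 is the function $\pi_N:L\to(\Sigma\setminus N)^*$ deleting every occurrence of symbols of $N$ from a string (so $\pi_N(\epsilon)=\epsilon$). The $N$-pump is the relation $P_N\subseteq L\times\Sigma^*$ defined as the smallest relation such that $\epsilon\,P_N\,\epsilon$, $s\,P_N\,s$ for every $s\in L$, and whenever $s\,P_N\,t_1\cdots t_\ell$, then $s\,P_N\,t_1\cdots t_k\,b\,t_{k+1}\cdots t_\ell$ for every $b\in N$ and $k\in\{1,\dots,\ell\}$. *)

(* Defs.v *)
From mathcomp Require Import all_boot.
Set Implicit Arguments. Unset Strict Implicit. Unset Printing Implicit Defensive.

(* Observations are drawn from an ambient eqType O (Y(F) is a finite list of
   elements of O), outputs from an ambient type Cout (C is a subset of Cout). *)
Record device (O : eqType) (Cout : Type) := Device {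
  st : finType;
  init : {set st};
  obs : seq O;
  tau : st -> st -> pred O;
  outs : Cout -> Prop;
  outc : st -> Cout -> Prop;
  st_nonempty : 0 < #|st|;
  init_nonempty : init != set0;
  tau_sub : forall v w y, tau v w y -> y \in obs;
  outc_sub : forall v x, outc v x -> outs x;
  outc_nonempty : forall v, exists x, outc v x
}.

Section Dev.
Variables (O : eqType) (Cout : Type).

Fixpoint reaches (F : device O Cout) (v : st F) (s : seq O) (w : st F) : Prop :=
  match s with
  | [::] => v = w
  | y :: s' => exists u : st F, tau v u y /\ reaches u s' w
  end.

Definition reached (F : device O Cout) (s : seq O) (w : st F) : Prop :=
  exists2 v, v \in init F & reaches v s w.

Definition inL (F : device O Cout) (s : seq O) : Prop :=
  exists w : st F, reached s w.

Definition outputs (F : device O Cout) (s : seq O) (x : Cout) : Prop :=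
  exists2 w : st F, reached s w & outc w x.

Definition output_simulates (F' F : device O Cout) (R : seq O -> seq O -> Prop) : Prop :=
  forall s, inL F s ->
    (exists t, R s t /\ inL F' t) /\
    (forall t, R s t -> inL F' t /\ (forall x, outputs F' t x -> outputs F s x)).

Definition shrink (N : seq O) (s : seq O) : seq O := [seq y <- s | y \notin N].

Definition shrink_rel (L : seq O -> Prop) (N : seq O) (s t : seq O) : Prop :=
  L s /\ t = shrink N s.

Inductive pump (L : seq O -> Prop) (N : seq O) : seq O -> seq O -> Prop :=
  | pump_nil : pump L N [::] [::]
  | pump_refl s : L s -> pump L N s s
  | pump_ins s t1 t2 b :
      pump L N s (t1 ++ t2) -> b \in N -> 0 < size t1 ->
      pump L N s (t1 ++ b :: t2).

End Dev.

(* Main.v *)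
Require Import Defs.
From mathcomp Require Import all_boot.
From Stdlib Require Import Classical.
Set Implicit Arguments. Unset Strict Implicit. Unset Printing Implicit Defensive.

Inductive NSup {O : eqType} (N : seq O) : seq O -> seq O -> Prop :=
 | NS_nil : NSup N [::] [::]
 | NS_cons a r r' : NSup N r r' -> NSup N (a :: r) (a :: r')
 | NS_ins b r r' : b \in N -> NSup N r r' -> NSup N r (b :: r').

Lemma NSup_refl {O : eqType} (N : seq O) s : NSup N s s.
Proof. elim: s => [|a s IH]; [exact: NS_nil | exact: NS_cons]. Qed.

Lemma NSup_nilN {O : eqType} (N : seq O) s : all (fun y => y \in N) s -> NSup N [::] s.
Proof.
elim: s => [|a s IH] /=; first by move=> _; exact: NS_nil.
by case/andP=> Ha Hs; apply: NS_ins => //; apply: IH.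
Qed.

Lemma NSup_trans {O : eqType} (N : seq O) b c : NSup N b c -> forall a, NSup N a b -> NSup N a c.
Proof.
elim=> {b c} [|x r r' H IH|y r r' Hy H IH] a Hab.
- by inversion Hab; subst; exact: NS_nil.
- inversion Hab; subst.
  + by apply: NS_cons; apply: IH.
  + by apply: NS_ins => //; apply: IH.
- by apply: NS_ins => //; apply: IH.
Qed.

Lemma NSup_shrink {O : eqType} (N : seq O) r c : NSup N r c -> shrink N c = shrink N r.
Proof.
rewrite /shrink; elim=> {r c} [//|a r r' H IH|b r r' Hb H IH] /=.
- by rewrite IH.
- by rewrite Hb.
Qed.

Lemma NSup_common {O : eqType} (N : seq O) a b : shrink N a = shrink N b ->
  exists c, NSup N a c /\ NSup N b c.
Proof.
rewrite /shrink.
elim: a b => [|x a IH] b /=.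
- move=> Hb; exists b; split; last exact: NSup_refl.
  apply: NSup_nilN; apply/allP => y yb; apply/negPn/negP => Hy.
  have : y \in [seq y <- b | y \notin N] by rewrite mem_filter Hy yb.
  by rewrite -Hb.
- case: ifP => Hx.
  + elim: b => [|z b IHb] //= .
    case: ifP => Hz.
    * case=> <- Heq. have [c [H1 H2]] := IH b Heq.
      by exists (x :: c); split; apply: NS_cons.
    * move=> Heq; have [c [H1 H2]] := IHb Heq.
      exists (z :: c); split; first by apply: NS_ins => //; move/negbFE: Hz.
      exact: NS_cons.
  + move=> Heq; have [c [H1 H2]] := IH b Heq.
    exists (x :: c); split; first exact: NS_cons.
    by apply: NS_ins => //; move/negbFE: Hx.
Qed.

Lemma pump_NSup {O : eqType} (L : seq O -> Prop) (N : seq O) s y r r' :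
  NSup N r r' -> forall p, pump L N s (y :: p ++ r) -> pump L N s (y :: p ++ r').
Proof.
elim=> {r r'} [//|a r r' H IH|b r r' Hb H IH] p Hp.
- by rewrite -cat_rcons; apply: IH; rewrite cat_rcons.
- have := pump_ins (t1 := y :: p) (IH p Hp) Hb isT. by [].
Qed.

Lemma pump_shrink {O : eqType} (L : seq O -> Prop) (N : seq O) s t :
  pump L N s t -> shrink N t = shrink N s.
Proof.
rewrite /shrink; elim=> {s t} [//|//|s t1 t2 b H IH Hb _].
by rewrite filter_cat /= Hb -IH filter_cat.
Qed.

Definition post {O : eqType} {Cout : Type} (F : device O Cout) (y : O) (S : {set st F}) : {set st F} :=
  [set w | [exists v in S, tau v w y]].
Definition Rs {O : eqType} {Cout : Type} (F : device O Cout) (s : seq O) (S : {set st F}) :=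
  foldl (fun S y => post y S) S s.
Definition eN {O : eqType} {Cout : Type} (F : device O Cout) (N : seq O) : rel {set st F} :=
  fun S T => has (fun y => T == post y S) N.
Definition Nclos {O : eqType} {Cout : Type} (F : device O Cout) (N : seq O) (S : {set st F}) :
  {set {set st F}} := [set T | connect (eN N) S T].
Definition step {O : eqType} {Cout : Type} (F : device O Cout) (N : seq O)
  (X : {set {set st F}}) (y : O) : {set {set st F}} :=
  [set T | [exists S in X, (T \in Nclos N (post y S)) && (T != set0)]].
Definition X0 {O : eqType} {Cout : Type} (F : device O Cout) (N : seq O) : {set {set st F}} :=
  [set T | (T \in Nclos N (init F)) && (T != set0)].
Definition Xs {O : eqType} {Cout : Type} (F : device O Cout) (N : seq O) (u : seq O) :=
  foldl (step N) (X0 F N) u.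

Lemma Rs_spec {O : eqType} {Cout : Type} (F : device O Cout) s (S : {set st F}) w :
  w \in Rs s S <-> exists2 v, v \in S & reaches v s w.
Proof.
elim: s S => [|y s IH] S /=.
- by split=> [H|[v Hv Hvw]]; [exists w | rewrite -Hvw].
- change (w \in Rs s (post y S) <-> exists2 v, v \in S & reaches v (y :: s) w).
  split.
  + move/IH => [u]; rewrite inE => /existsP [v /andP [Hv Ht]] Hr.
    by exists v => //; exists u.
  + case=> v Hv [u [Ht Hr]]; apply/IH; exists u => //.
    by rewrite inE; apply/existsP; exists v; rewrite Hv.
Qed.

Lemma Rs_cat {O : eqType} {Cout : Type} (F : device O Cout) s1 s2 (S : {set st F}) :
  Rs (s1 ++ s2) S = Rs s2 (Rs s1 S).
Proof. by rewrite /Rs foldl_cat. Qed.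

Lemma Rs_cons {O : eqType} {Cout : Type} (F : device O Cout) y s (S : {set st F}) :
  Rs (y :: s) S = Rs s (post y S).
Proof. by []. Qed.

Lemma Rs_set0 {O : eqType} {Cout : Type} (F : device O Cout) s :
  Rs s (set0 : {set st F}) = set0.
Proof.
apply/setP => w; rewrite inE; apply/negbTE/negP => /Rs_spec [v].
by rewrite inE.
Qed.

Lemma Nclos_spec {O : eqType} {Cout : Type} (F : device O Cout) N (S T : {set st F}) :
  T \in Nclos N S <-> exists2 w, all (fun y => y \in N) w & T = Rs w S.
Proof.
rewrite inE; split.
- case/connectP => p; elim: p S => [|S1 p IH] S /=.
  + by move=> _ ->; exists [::].
  + case/andP => /hasP [y Hy /eqP HS1] Hp HT.
    have [w Hw ->] := IH S1 Hp HT.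
    by exists (y :: w); rewrite /= ?Hy ?Hw // HS1.
- case=> w; elim: w S => [|y w IH] S /=; first by move=> _ ->; exact: connect0.
  case/andP => Hy Hw HT.
  apply: connect_trans (connect1 _) (IH (post y S) Hw HT).
  by apply/hasP; exists y.
Qed.

Lemma shrink_rcons_split {O : eqType} (N : seq O) s u y : y \notin N ->
  shrink N s = rcons u y ->
  exists s' w, [/\ s = s' ++ y :: w, shrink N s' = u & all (fun z => z \in N) w].
Proof.
rewrite /shrink => Hy; elim/last_ind: s => [|s0 z IH].
- by case: u.
- rewrite filter_rcons; case: ifP => Hz.
  + move/eqP; rewrite eqseq_rcons => /andP [/eqP H1 /eqP H2]; subst z.
    by exists s0, [::]; split => //; rewrite cats1.
  + move=> /IH [s' [w [-> H2 H3]]]; exists s', (rcons w z); split => //.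
    * by rewrite rcons_cat.
    * by rewrite all_rcons H3 andbT; move/negbFE: Hz.
Qed.

Lemma Xs_spec {O : eqType} {Cout : Type} (F : device O Cout) N u (T : {set st F}) :
  all (fun y => y \notin N) u ->
  (T \in Xs F N u <-> T != set0 /\ exists2 s, shrink N s = u & T = Rs s (init F)).
Proof.
elim/last_ind: u T => [|u y IH] T.
- move=> _; rewrite /Xs /= /X0 inE; split.
  + case/andP => /Nclos_spec [w Hw ->] Hn; split => //; exists w => //.
    rewrite /shrink; apply/eqP; rewrite -[_ == _]negbK -has_filter; apply/negP => /hasP [z Hz].
    by rewrite (allP Hw z Hz).
  + case=> Hn [s Hs HT]; subst T; rewrite andbC Hn /=; apply/Nclos_spec; exists s => //.
    apply/allP => z Hz; apply/negPn/negP => Hz'.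
    have : z \in shrink N s by rewrite mem_filter Hz' Hz.
    by rewrite Hs.
- rewrite all_rcons => /andP [Hy Hu].
  rewrite /Xs -cats1 foldl_cat -/(Xs F N u) /= /step inE; split.
  + case/existsP => S /andP [HS /andP [/Nclos_spec [w Hw ->] Hn]]; split => //.
    have [HSn [s' Hs' ->]] := (IH S Hu).1 HS.
    exists (s' ++ y :: w); last by rewrite Rs_cat.
    rewrite /shrink filter_cat /= Hy -/(shrink N s') Hs' cats1.
    have -> : [seq z <- w | z \notin N] = [::].
      apply/eqP; rewrite -[_ == _]negbK -has_filter; apply/negP => /hasP [z Hz].
      by rewrite (allP Hw z Hz).
    by rewrite cats1.
  + case=> Hn [s Hs HT]; subst T.
    have [s' [w [Hse H2 H3]]] := shrink_rcons_split Hy (etrans Hs (cats1 _ _)); subst s.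
    apply/existsP; exists (Rs s' (init F)).
    rewrite Rs_cat Rs_cons in Hn *.
    apply/andP; split.
    * apply/(IH _ Hu); split; last by exists s'.
      apply/negP => /eqP H0; move: Hn; rewrite H0.
      have -> : post y (set0 : {set st F}) = set0.
        by apply/setP => v; rewrite !inE; apply/negbTE/existsP => [[x]]; rewrite inE.
      by rewrite Rs_set0 eqxx.
    * by rewrite Hn andbT; apply/Nclos_spec; exists w.
Qed.

Definition hc {O : eqType} (N : seq O) (s : seq O) := if s is y :: _ then y \notin N else true.
Definition Ext {O : eqType} (N : seq O) (s t : seq O) :=
  (s = [::] /\ t = [::]) \/ exists y r c, [/\ s = y :: r, t = y :: c & NSup N r c].

Lemma Ext_refl {O : eqType} (N : seq O) s : Ext N s s.
Proof. case: s => [|y r]; [by left | right; exists y, r, r; split => //; exact: NSup_refl]. Qed.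

Lemma Ext_trans {O : eqType} (N : seq O) a b c : Ext N a b -> Ext N b c -> Ext N a c.
Proof.
case=> [[-> ->]|[y [r [c1 [-> -> H1]]]]] [[Hb ->]|[y' [r' [c2 [Hb -> H2]]]]] //.
- by left.
- right; case: Hb => Hy Hr; subst; exists y', r, c2; split => //.
  exact: NSup_trans H2 _ H1.
Qed.

Lemma Ext_hc {O : eqType} (N : seq O) s t : Ext N s t -> hc N s -> hc N t.
Proof. by case=> [[-> ->]|[y [r [c [-> -> _]]]]]. Qed.

Lemma Ext_shrink {O : eqType} (N : seq O) s t : Ext N s t -> shrink N t = shrink N s.
Proof.
case=> [[-> ->]|[y [r [c [-> -> H]]]]] //.
by rewrite /shrink /= -!/(shrink N _) (NSup_shrink H).
Qed.

Lemma Ext_pair {O : eqType} (N : seq O) s1 s2 : hc N s1 -> hc N s2 ->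
  shrink N s1 = shrink N s2 -> exists t, Ext N s1 t /\ Ext N s2 t.
Proof.
case: s1 => [|y1 r1]; case: s2 => [|y2 r2] //=; rewrite /shrink /=.
- by move=> _ _ _; exists [::]; split; left.
- by move=> _ ->.
- by move=> -> _.
- move=> -> -> [<-]; rewrite -!/(shrink N _) => /NSup_common [c [H1 H2]].
  by exists (y1 :: c); split; right; [exists y1, r1, c | exists y1, r2, c].
Qed.

Lemma Ext_common {O : eqType} (N : seq O) s0 (l : seq (seq O)) : hc N s0 ->
  (forall s, s \in l -> hc N s /\ shrink N s = shrink N s0) ->
  exists t, Ext N s0 t /\ forall s, s \in l -> Ext N s t.
Proof.
move=> H0; elim: l => [|s l IH] Hl.
- by exists s0; split => //; exact: Ext_refl.
- have [t [Ht Hlt]] := IH (fun s' Hs' => Hl s' (mem_behead (s := s :: l) Hs')).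
  have [Hs Hss] := Hl s (mem_head _ _).
  have [t' [H1 H2]] := Ext_pair (Ext_hc Ht H0) Hs (etrans (Ext_shrink Ht) (esym Hss)).
  exists t'; split; first exact: Ext_trans Ht H1.
  move=> s'; rewrite inE => /orP [/eqP ->|Hs'] //.
  exact: Ext_trans (Hlt s' Hs') H1.
Qed.

Lemma Ext_pump {O : eqType} (L : seq O -> Prop) (N : seq O) s t : L s -> Ext N s t -> pump L N s t.
Proof.
move=> HL [[Hs Ht]|[y [r [c [Hs Ht H]]]]]; subst; first exact: pump_nil.
have := pump_NSup (s := y :: r) (L := L) (y := y) H (p:=[::]). by apply; apply: pump_refl.
Qed.

Definition ignN {O : eqType} {Cout : Type} (G : device O Cout) (N : seq O) : device O Cout.
refine (@Device O Cout (st G) (init G) (obs G ++ N)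
  (fun v w y => if y \in N then v == w else tau v w y) (outs G) (@outc _ _ G)
  (st_nonempty G) (init_nonempty G) _ (@outc_sub _ _ G) (@outc_nonempty _ _ G)).
move=> v w y /=; case: ifP => H Ht; rewrite mem_cat ?H ?orbT //.
by rewrite (tau_sub Ht).
Defined.

Lemma ignN_reaches {O : eqType} {Cout : Type} (G : device O Cout) N t (v w : st G) :
  @reaches _ _ (ignN G N) v t w <-> reaches v (shrink N t) w.
Proof.
elim: t v => [|y t IH] v //=.
rewrite /shrink /=; case Hy: (y \in N) => /=.
- split.
  + by case=> u [/eqP <-] /IH.
  + by move/IH => H; exists v.
- split.
  + by case=> u [Ht /IH]; exists u.
  + by case=> u [Ht /IH H]; exists u.
Qed.

Lemma ignN_inL {O : eqType} {Cout : Type} (G : device O Cout) N t :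
  inL (ignN G N) t <-> inL G (shrink N t).
Proof.
split; case=> w [v Hv Hr]; exists w; exists v => //; by apply/ignN_reaches.
Qed.

Lemma ignN_outputs {O : eqType} {Cout : Type} (G : device O Cout) N t x :
  outputs (ignN G N) t x <-> outputs G (shrink N t) x.
Proof.
split; case=> w [v Hv Hr] Ho; exists w => //; exists v => //; by apply/ignN_reaches.
Qed.

Definition Dout {O : eqType} {Cout : Type} (F : device O Cout) (X : {set {set st F}}) (x : Cout) :=
  (forall S, S \in X -> exists2 v, v \in S & outc v x) \/
  ~ (exists x', forall S, S \in X -> exists2 v, v \in S & outc v x').

Definition Det {O : eqType} {Cout : Type} (F : device O Cout) (N : seq O) : device O Cout.
refine (@Device O Cout {set {set st F}} [set X0 F N] (obs F)
  (fun X Y y => (y \in obs F) && (Y == step N X y)) (fun _ => True) (@Dout _ _ F)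
  _ _ _ _ _).
- by apply/card_gt0P; exists set0.
- by apply/set0Pn; exists (X0 F N); rewrite inE.
- by move=> v w y /andP [].
- by [].
- move=> X.
  have [v Hv] : exists v, v \in init F by apply/set0Pn; exact: init_nonempty.
  have [x0 Hx0] := outc_nonempty v.
  case: (classic (exists x', forall S, S \in X -> exists2 v, v \in S & outc v x')).
  + by case=> x' H; exists x'; left.
  + by move=> H; exists x0; right.
Defined.

Lemma Det_reaches {O : eqType} {Cout : Type} (F : device O Cout) N (X Y : st (Det F N)) u :
  reaches X u Y <-> all (fun y => y \in obs F) u /\ Y = foldl (step N) X u.
Proof.
elim: u X => [|y u IH] X /=.
- by split=> [->|[_ ->]].
- split.
  + case=> Z [/andP [Hy /eqP HZ] /IH [Hu ->]]; subst Z; by rewrite Hy Hu.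
  + case=> /andP [Hy Hu] HY; exists (step N X y); split; first by rewrite /= Hy eqxx.
    by apply/IH.
Qed.

Lemma Det_reached {O : eqType} {Cout : Type} (F : device O Cout) N (Y : st (Det F N)) u :
  reached u Y <-> all (fun y => y \in obs F) u /\ Y = Xs F N u.
Proof.
split.
- case=> X; rewrite inE => /eqP -> /Det_reaches //.
- move=> H; exists (X0 F N); first by rewrite inE.
  exact/Det_reaches.
Qed.

Lemma reaches_obs {O : eqType} {Cout : Type} (F : device O Cout) v s w :
  @reaches _ _ F v s w -> all (fun y => y \in obs F) s.
Proof.
elim: s v => [|y s IH] v //= [u [Ht Hr]].
by rewrite (tau_sub Ht) (IH _ Hr).
Qed.

Lemma collect {A B : eqType} (P : A -> B -> Prop) (l : seq A) :
  (forall a, a \in l -> exists b, P a b) ->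
  exists lb : seq B, (forall b, b \in lb -> exists a, P a b) /\
                     forall a, a \in l -> exists2 b, b \in lb & P a b.
Proof.
elim: l => [|a l IH] H.
- by exists [::].
- have [lb [H1 H2]] := IH (fun a' Ha' => H a' (mem_behead (s := a :: l) Ha')).
  have [b Hb] := H a (mem_head _ _).
  exists (b :: lb); split.
  + move=> b'; rewrite inE => /orP [/eqP ->|Hb']; [by exists a | exact: H1].
  + move=> a'; rewrite inE => /orP [/eqP ->|Ha']; first by exists b; rewrite ?mem_head.
    by have [b' Hb'1 Hb'2] := H2 a' Ha'; exists b' => //; rewrite inE Hb'1 orbT.
Qed.

Theorem theorem3 (O : eqType) (Cout : Type) (F : device O Cout) (N : seq O) :
  {subset N <= obs F} ->
  (forall (y : O) (s : seq O), inL F (y :: s) -> y \in obs F /\ y \notin N) ->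
  (exists F' : device O Cout, output_simulates F' F (pump (inL F) N)) <->
  (exists F' : device O Cout, output_simulates F' F (shrink_rel (inL F) N)).
Proof.
move=> Hsub Hhead.
have Hhc : forall s, inL F s -> hc N s.
  by case=> [|y r] // /Hhead [].
have HinLR : forall s, inL F s <-> Rs s (init F) != set0.
  move=> s; split.
  - case=> w Hw; apply/set0Pn; exists w; exact/Rs_spec.
  - by case/set0Pn => w /Rs_spec Hw; exists w.
split.
- case=> F' HF'; exists (Det F N) => s HsL.
  have Hall : all (fun y => y \in obs F) (shrink N s).
    case: HsL => w [v _ Hr]; have := reaches_obs Hr.
    move/allP => H; apply/allP => y; rewrite mem_filter => /andP [_ Hy]; exact: H.
  have HinL : inL (Det F N) (shrink N s).
    by exists (Xs F N (shrink N s)); apply/Det_reached.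
  have Hkey : Rs s (init F) \in Xs F N (shrink N s).
    apply/Xs_spec; first exact: filter_all.
    by split; [apply/HinLR | exists s].
  split; first by exists (shrink N s); split.
  move=> t [_ ->]; split => // x [Y /Det_reached [_ ->] HY].
  case: HY => [H|H].
  + have [v Hv Ho] := H _ Hkey; exists v => //; exact/Rs_spec.
  + exfalso; apply: H.
    have Hpre : forall T, T \in enum (Xs F N (shrink N s)) -> exists s',
        [/\ inL F s', shrink N s' = shrink N s & T = Rs s' (init F)].
      move=> T HT; rewrite mem_enum in HT.
      have [Hn [s' Hs' HT']] := (Xs_spec T (filter_all _ _)).1 HT.
      exists s'; split => //; apply/HinLR; by rewrite -HT'.
    have [ls [Hls1 Hls2]] := collect Hpre.
    have Hpre2 : forall s', s' \in ls -> hc N s' /\ shrink N s' = shrink N s.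
      move=> s' Hs'; have [T [H1 H2 _]] := Hls1 s' Hs'; split => //; exact: Hhc.
    have [tt [Hst Hlt]] := Ext_common (Hhc s HsL) Hpre2.
    have [HtF' _] := (HF' s HsL).2 tt (Ext_pump HsL Hst).
    case: HtF' => w [v Hv Hr]; have [x' Hx'] := outc_nonempty w.
    have Hout : outputs F' tt x' by exists w => //; exists v.
    exists x' => S HS.
    rewrite -mem_enum in HS; have [s' Hs'1 [Hs'2 _ ->]] := Hls2 S HS.
    have [_ Ho] := (HF' s' Hs'2).2 tt (Ext_pump Hs'2 (Hlt s' Hs'1)).
    have [w' Hw' Ho'] := Ho _ Hout.
    by exists w' => //; apply/Rs_spec.
- case=> G HG; exists (ignN G N) => s HsL.
  have [Hi Ho] := (HG s HsL).2 (shrink N s) (conj HsL erefl).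
  split.
  + by exists s; split; [apply: pump_refl | apply/ignN_inL].
  + move=> t Hp; have Hsh := pump_shrink Hp; split.
    * by apply/ignN_inL; rewrite Hsh.
    * by move=> x /ignN_outputs; rewrite Hsh; apply: Ho.
Qed.
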